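(* Let $\lambda_2<0$, $C_1,C_2\in\mathbb{R}$, and $q(t)=C_1t+\frac{C_2}{\lambda_2}\big(e^{\lambda_2 t}-1\big)+1$. Then $q$ vanishes at some $t>0$ if and only if one of the following holds: (1) $C_1<0$; (2) $C_1=0$, $C_2<\lambda_2$; (3) $C_1>0$, $C_2<0$, $C_1+C_2<0$ and $\lambda_2+C_1\ln\!\left(-\tfrac{C_1}{C_2}\right)\ge C_1+C_2$.
   Context: This $q$ is the decisive function of the extended system $\dot{\mathbf v}=-v_1\mathbf v+Q\mathbf v$ when $Q$ is diagonalizable with eigenvalues $\lambda_1=0>\lambda_2$ (with $C_1=\frac{a_{22}}{\det A}(a_{11}v_1(0)+a_{12}v_2(0))$, $C_2=-\frac{a_{12}}{\det A}(a_{21}v_1(0)+a_{22}v_2(0))$, $AQA^{-1}=\mathrm{diag}(\lambda_1,\lambda_2)$); finite-time blow-up of the extended system is equivalent to $q$ vanishing at some $t>0$. *)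

(* Defs.v *)
From Stdlib Require Import Reals.
Open Scope R_scope.

Definition qfun (lam2 C1 C2 t : R) : R :=
  C1 * t + (C2 / lam2) * (exp (lam2 * t) - 1) + 1.

(* Main.v *)
Require Import Defs.
From Stdlib Require Import Reals Lra Psatz.
Open Scope R_scope.

Lemma q_cont l C1 C2 : continuity (fun t => qfun l C1 C2 t).
Proof. unfold qfun. reg. Qed.

Lemma exp_bounds l t : l < 0 -> 0 <= t -> 0 < exp (l*t) <= 1.
Proof.
  intros Hl Ht. split. apply exp_pos.
  rewrite <- exp_0. destruct (Req_dec t 0). subst. rewrite Rmult_0_r. lra.
  left. apply exp_increasing. nra.
Qed.

Lemma q_upper l C1 C2 t : l < 0 -> 0 <= t ->
  qfun l C1 C2 t <= C1 * t + Rabs (C2/l) + 1.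
Proof.
  intros Hl Ht. unfold qfun. pose proof (exp_bounds l t Hl Ht).
  set (K := C2/l). set (e := exp (l*t)) in *.
  destruct (Rle_dec 0 K).
  - rewrite Rabs_right by lra. nra.
  - rewrite Rabs_left by lra. nra.
Qed.

Lemma q_lower l C1 C2 t : l < 0 -> 0 <= t ->
  C1 * t - Rabs (C2/l) + 1 <= qfun l C1 C2 t.
Proof.
  intros Hl Ht. unfold qfun. pose proof (exp_bounds l t Hl Ht).
  set (K := C2/l). set (e := exp (l*t)) in *.
  destruct (Rle_dec 0 K).
  - rewrite Rabs_right by lra. nra.
  - rewrite Rabs_left by lra. nra.
Qed.

Lemma q0 l C1 C2 : qfun l C1 C2 0 = 1.
Proof. unfold qfun. rewrite !Rmult_0_r, exp_0. ring. Qed.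

Theorem mainTheorem5 (lam2 C1 C2 : R) (Hlam : lam2 < 0) :
  (exists t : R, 0 < t /\ qfun lam2 C1 C2 t = 0) <->
  (C1 < 0
   \/ (C1 = 0 /\ C2 < lam2)
   \/ (0 < C1 /\ C2 < 0 /\ C1 + C2 < 0 /\
       lam2 + C1 * ln (- (C1 / C2)) >= C1 + C2)).
Proof.
  set (l := lam2) in *.
  assert (Hmin : 0 < C1 -> C2 < 0 -> C1 + C2 < 0 ->
     let a := - (C1/C2) in let ts := ln a / l in
     0 < ts /\ (forall t, qfun l C1 C2 ts <= qfun l C1 C2 t) /\
     qfun l C1 C2 ts * l = l + C1 * ln a - (C1 + C2)).
  { intros H1 H2 H3 a ts.
    assert (Ha0 : 0 < a) by (unfold a; apply Ropp_0_gt_lt_contravar;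
       unfold Rdiv; apply Rmult_pos_neg; [lra| apply Rinv_lt_0_compat; lra]).
    assert (Ha1 : a < 1).
    { unfold a. replace (- (C1/C2)) with (C1 / (-C2)) by (field; lra).
      apply Rmult_lt_reg_r with (-C2). lra. unfold Rdiv.
      rewrite Rmult_assoc, Rinv_l by lra. lra. }
    assert (Hea : exp (l * ts) = a).
    { unfold ts. replace (l * (ln a / l)) with (ln a) by (field; lra).
      apply exp_ln; lra. }
    assert (Hln : ln a < 0) by (rewrite <- ln_1; apply ln_increasing; lra).
    assert (HC2a : C2 * a = - C1) by (unfold a; field; lra).
    assert (HK : 0 < C2 / l) by (unfold Rdiv; apply Rmult_neg_neg;
       [lra | apply Rinv_lt_0_compat; lra]).
    split; [|split].
    - unfold ts, Rdiv. apply Rmult_neg_neg. lra. apply Rinv_lt_0_compat; lra.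
    - intros t. unfold qfun. rewrite Hea.
      assert (He : exp (l*t) = a * exp (l * (t - ts))).
      { rewrite <- Hea, <- exp_plus. f_equal. ring. }
      pose proof (exp_ineq1_le (l * (t - ts))).
      assert (exp (l*t) >= a * (1 + l*(t-ts))) by (rewrite He; nra).
      assert (C2 / l * (exp (l*t) - a) >= C2 / l * (a * l * (t - ts))) by nra.
      assert (Hr : C2 / l * (a * l * (t - ts)) = - C1 * (t - ts))
        by (rewrite <- HC2a; field; lra).
      rewrite Hr in H4. lra.
    - unfold qfun. rewrite Hea. unfold ts. field_simplify; [|lra..].
      replace (C2 * a) with (-C1) by lra. field. }
  split.
  - intros [t [Ht Hq]].
    destruct (Rtotal_order C1 0) as [H1|[H1|H1]].
    + left; auto.
    + right; left. split; auto.
      destruct (Rlt_le_dec C2 l) as [H2|H2]; auto. exfalso.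
      unfold qfun in Hq. subst C1.
      pose proof (exp_bounds l t Hlam (Rlt_le _ _ Ht)) as [E1 E2].
      set (K := C2/l) in *. set (e := exp (l*t)) in *.
      assert (K <= 1).
      { unfold K. apply Rmult_le_reg_r with (-l). lra.
        unfold Rdiv. replace (C2 * / l * - l) with (-C2) by (field; lra). lra. }
      nra.
    + right; right. split; auto.
      destruct (Rlt_le_dec C2 0) as [H2|H2].
      2:{ exfalso. unfold qfun in Hq.
          pose proof (exp_bounds l t Hlam (Rlt_le _ _ Ht)) as [E1 E2].
          assert (C2 / l <= 0).
          { unfold Rdiv. destruct (Req_dec C2 0). subst; lra.
            left. apply Rmult_pos_neg. lra. apply Rinv_lt_0_compat; lra. }
          nra. }
      split; auto.
      destruct (Rlt_le_dec (C1 + C2) 0) as [H3|H3].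
      2:{ exfalso. unfold qfun in Hq.
          pose proof (exp_ineq1_le (l*t)).
          assert (HK : 0 < C2 / l) by (unfold Rdiv; apply Rmult_neg_neg;
             [lra | apply Rinv_lt_0_compat; lra]).
          assert (C2 / l * (exp (l*t) - 1) >= C2 / l * (l*t)) by nra.
          replace (C2 / l * (l*t)) with (C2 * t) in H0 by (field; lra).
          nra. }
      split; auto.
      destruct (Hmin H1 H2 H3) as [Hts [Hle Heq]].
      specialize (Hle t). rewrite Hq in Hle.
      apply Rle_ge. nra.
  - intros [H1|[[H1 H2]|[H1 [H2 [H3 H4]]]]].
    + set (T := (Rabs (C2/l) + 2) / (- C1)).
      assert (HT : 0 < T).
      { unfold T, Rdiv. apply Rmult_lt_0_compat.
        pose proof (Rabs_pos (C2/l)); lra. apply Rinv_0_lt_compat; lra. }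
      assert (HqT : qfun l C1 C2 T < 0).
      { pose proof (q_upper l C1 C2 T Hlam (Rlt_le _ _ HT)).
        replace (C1 * T) with (-(Rabs (C2/l) + 2)) in H by (unfold T; field; lra).
        lra. }
      destruct (IVT (fun t => - qfun l C1 C2 t) 0 T) as [z [Hz Hfz]]; auto.
      { apply continuity_opp, q_cont. }
      { simpl. rewrite q0. lra. }
      { simpl. lra. }
      exists z. split.
      * destruct Hz as [Hz _]. destruct Hz; auto. subst z.
        simpl in Hfz. rewrite q0 in Hfz. lra.
      * simpl in Hfz. lra.
    + subst C1.
      assert (HK : 0 < C2 / l) by (unfold Rdiv; apply Rmult_neg_neg;
         [lra | apply Rinv_lt_0_compat; lra]).
      assert (Hb : 0 < 1 - l / C2 < 1).
      { split.
        - assert (l / C2 < 1).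
          { apply Rmult_lt_reg_r with (-C2). lra.
            unfold Rdiv. replace (l * / C2 * - C2) with (-l) by (field; lra). lra. }
          lra.
        - assert (0 < l / C2) by (unfold Rdiv; apply Rmult_neg_neg;
             [lra | apply Rinv_lt_0_compat; lra]). lra. }
      exists (ln (1 - l / C2) / l). split.
      * assert (ln (1 - l/C2) < 0) by (rewrite <- ln_1; apply ln_increasing; lra).
        unfold Rdiv at 1. apply Rmult_neg_neg. lra. apply Rinv_lt_0_compat; lra.
      * unfold qfun. replace (l * (ln (1 - l / C2) / l)) with (ln (1 - l/C2))
          by (field; lra).
        rewrite exp_ln by lra. field. lra.
    + destruct (Hmin H1 H2 H3) as [Hts [Hle Heq]]. cbv zeta in *.
      set (ts := ln (- (C1 / C2)) / l) in *.
      assert (Hqts : qfun l C1 C2 ts <= 0) by nra.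
      destruct Hqts as [Hqts|Hqts]; [| exists ts; auto].
      set (T := ts + (Rabs (C2/l) + 1) / C1).
      assert (HT : ts < T).
      { unfold T. assert (0 < (Rabs (C2/l) + 1) / C1); [|lra].
        unfold Rdiv. apply Rmult_lt_0_compat.
        pose proof (Rabs_pos (C2/l)); lra. apply Rinv_0_lt_compat; lra. }
      assert (HqT : 0 < qfun l C1 C2 T).
      { pose proof (q_lower l C1 C2 T Hlam ltac:(lra)).
        replace (C1 * T) with (C1 * ts + (Rabs (C2/l) + 1)) in H by (unfold T; field; lra).
        nra. }
      destruct (IVT (fun t => qfun l C1 C2 t) ts T) as [z [Hz Hfz]]; auto.
      { apply q_cont. }
      exists z. split; [lra | auto].
Qed.
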